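(* For the $k$-server problem on the line, for every instance $I$, every prediction, and every $\lambda\in(0,1]$, there is $c\ge0$ depending only on the initial configuration such that $\mathrm{LambdaDC}(I)\le\beta(k)\cdot\mathrm{OPT}(I)+c$, where $\beta(k)=\sum_{i=0}^{k-1}\lambda^{-i}$.
   Context: The $k$-server problem on the line: servers on $\mathbb{R}$ labeled $s_1\le\dots\le s_k$, requests revealed online and served by moving a server to them; cost = total distance moved; $\mathrm{OPT}(I)$ is the optimal offline cost. A prediction gives for each request $r_t$ an index $p_t\in\{1,\dots,k\}$. LambdaDC with parameter $\lambda$: if $r_t<s_1$ or $r_t>s_k$, move only the closest server; if $s_i<r_t<s_{i+1}$ and $p_t\le i$, move $s_i$ at speed $1$ and $s_{i+1}$ at speed $\lambda$ towards $r_t$ until one reaches it; if $p_t\ge i+1$, the speeds are swapped. *)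

(* Defs.v *)
From Stdlib Require Import Reals Lra List.
From Coquelicot Require Import Coquelicot.
Open Scope R_scope.

(* Configurations of k servers on the line: s : nat -> R, server j at s j,
   for j = 1..k (values at other indices are irrelevant). *)

Fixpoint sumR (n : nat) (f : nat -> R) : R :=
  match n with O => 0 | S m => sumR m f + f m end.

Definition upd (s : nat -> R) (i : nat) (v : R) : nat -> R :=
  fun j => if Nat.eqb j i then v else s j.

Fixpoint find_gap (s : nat -> R) (r : R) (n : nat) : option nat :=
  match n with
  | O => None
  | S m =>
    match find_gap s r m with
    | Some i => Some i
    | None =>
      if Rlt_dec (s (S m)) r then
        if Rlt_dec r (s (S (S m))) then Some (S m) else None
      else None
    end
  end.

(* One step of LambdaDC on sorted configuration s (servers 1..k), request r,
   prediction p in {1..k}.  Returns (new configuration, cost of the step). *)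
Definition ldc_step (lam : R) (k : nat) (s : nat -> R) (r : R) (p : nat)
  : (nat -> R) * R :=
  if Rlt_dec r (s 1%nat) then (upd s 1%nat r, s 1%nat - r)
  else if Rlt_dec (s k) r then (upd s k r, r - s k)
  else match find_gap s r (k - 1) with
       | None => (s, 0)   (* r coincides with a server position *)
       | Some i =>
         let a := s i in
         let b := s (S i) in
         let va := if Nat.leb p i then 1 else lam in
         let vb := if Nat.leb p i then lam else 1 in
         (* time until the first of the two reaches r *)
         let t := Rmin ((r - a) / va) ((b - r) / vb) in
         (upd (upd s i (a + va * t)) (S i) (b - vb * t), (va + vb) * t)
       end.

Fixpoint ldc_cost (lam : R) (k : nat) (s : nat -> R) (rs : list R)
  (ps : nat -> nat) (t : nat) : R :=
  match rs with
  | nil => 0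
  | r :: rs' =>
    let '(s', c) := ldc_step lam k s r (ps t) in
    c + ldc_cost lam k s' rs' ps (S t)
  end.

Definition LambdaDC (lam : R) (k : nat) (s0 : nat -> R) (rs : list R)
  (ps : nat -> nat) : R := ldc_cost lam k s0 rs ps 0.

(* Offline schedules: sched t is the configuration after serving the first
   t requests; sched 0 is the initial configuration; after step t+1 some
   server sits on request t. *)
Definition feasible (k : nat) (s0 : nat -> R) (rs : list R)
  (sched : nat -> nat -> R) : Prop :=
  (forall j, (1 <= j <= k)%nat -> sched 0%nat j = s0 j) /\
  (forall t, (t < length rs)%nat ->
     exists j, (1 <= j <= k)%nat /\ sched (S t) j = nth t rs 0).

Definition sched_cost (k : nat) (rs : list R) (sched : nat -> nat -> R) : R :=
  sumR (length rs) (fun t =>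
    sumR k (fun j => Rabs (sched (S t) (S j) - sched t (S j)))).

Definition OPT (k : nat) (s0 : nat -> R) (rs : list R) : R :=
  real (Glb_Rbar (fun x => exists sched,
           feasible k s0 rs sched /\ x = sched_cost k rs sched)).

Definition beta (lam : R) (k : nat) : R := sumR k (fun i => / (lam ^ i)).

(* Main.v *)
Require Import Defs.
From Stdlib Require Import Reals List Lra Lia Permutation.
From Coquelicot Require Import Coquelicot.
Open Scope R_scope.
Import ListNotations.

Lemma sumR_ext n f g : (forall j, (j < n)%nat -> f j = g j) -> sumR n f = sumR n g.
Proof. induction n; simpl; intros H; [reflexivity|]. rewrite IHn, H; auto. Qed.

Lemma sumR_le n f g : (forall j, (j < n)%nat -> f j <= g j) -> sumR n f <= sumR n g.
Proof. induction n; simpl; intros H; [lra|]. assert (f n <= g n) by auto.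
  assert (sumR n f <= sumR n g) by auto. lra. Qed.

Lemma sumR_plus n f g : sumR n (fun j => f j + g j) = sumR n f + sumR n g.
Proof. induction n; simpl; [lra|]. rewrite IHn; lra. Qed.

Lemma sumR_scal n c f : sumR n (fun j => c * f j) = c * sumR n f.
Proof. induction n; simpl; [lra|]. rewrite IHn; lra. Qed.

Lemma sumR_nonneg n f : (forall j, (j < n)%nat -> 0 <= f j) -> 0 <= sumR n f.
Proof. intros H. apply Rle_trans with (sumR n (fun _ => 0)).
  - clear H; induction n; simpl; lra.
  - apply sumR_le; auto. Qed.

Lemma sumR_front n f : sumR (S n) f = f 0%nat + sumR n (fun j => f (S j)).
Proof. induction n; simpl in *; [lra|]. rewrite IHn. lra. Qed.

Lemma sumR_pt n f g p : (p < n)%nat -> (forall j, (j < n)%nat -> j <> p -> f j = g j) ->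
  sumR n g = sumR n f + (g p - f p).
Proof. induction n; intros Hp H; [lia|]. simpl.
  destruct (Nat.eq_dec p n).
  - subst. rewrite (sumR_ext n f g); [lra|]. intros; apply H; lia.
  - rewrite IHn; [|lia|intros; apply H; lia]. rewrite (H n); [lra|lia|lia]. Qed.

Lemma sumR_pt2 n f g p1 p2 : (p1 < n)%nat -> (p2 < n)%nat -> p1 <> p2 ->
  (forall j, (j < n)%nat -> j <> p1 -> j <> p2 -> f j = g j) ->
  sumR n g = sumR n f + (g p1 - f p1) + (g p2 - f p2).
Proof. intros H1 H2 H12 H.
  set (h := fun j => if Nat.eq_dec j p1 then g j else f j).
  rewrite (sumR_pt n h g p2); auto.
  rewrite (sumR_pt n f h p1); auto.
  - unfold h. destruct (Nat.eq_dec p1 p1); [|congruence].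
    destruct (Nat.eq_dec p2 p1); [congruence|]. lra.
  - intros j _ Hj. unfold h. destruct (Nat.eq_dec j p1); congruence.
  - intros j Hj Hj2. unfold h. destruct (Nat.eq_dec j p1); auto. Qed.

Lemma beta_S lam j : 0 < lam -> beta lam (S j) = 1 + / lam * beta lam j.
Proof. intros Hl. unfold beta. induction j as [|j IHj].
  - simpl. field; lra.
  - assert (E1 : sumR (S (S j)) (fun i => / lam ^ i) = sumR (S j) (fun i => / lam ^ i) + / lam ^ (S j)) by reflexivity.
    assert (E2 : sumR (S j) (fun i => / lam ^ i) = sumR j (fun i => / lam ^ i) + / lam ^ j) by reflexivity.
    rewrite E1. rewrite E2 at 2. rewrite IHj. simpl. rewrite Rinv_mult. ring. Qed.

Lemma beta_0 lam : beta lam 0 = 0.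
Proof. reflexivity. Qed.

Lemma beta_ge1 lam j : 0 < lam <= 1 -> (1 <= j)%nat -> 1 <= beta lam j.
Proof. intros Hl Hj. destruct j; [lia|]. rewrite beta_S by lra.
  assert (0 <= beta lam j). { unfold beta. apply sumR_nonneg. intros. 
   apply Rlt_le, Rinv_0_lt_compat, pow_lt; lra. }
  assert (0 < / lam) by (apply Rinv_0_lt_compat; lra). nra. Qed.

Lemma beta_nonneg lam j : 0 < lam <= 1 -> 0 <= beta lam j.
Proof. intros Hl. destruct j; [unfold beta; simpl; lra|]. pose proof (beta_ge1 lam (S j) Hl ltac:(lia)). lra. Qed.

Lemma mu_ge1 lam : 0 < lam <= 1 -> 1 <= / lam.
Proof. intros H. rewrite <- Rinv_1. apply Rinv_le_contravar; lra. Qed.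

Lemma beta_conv lam a b : 0 < lam <= 1 -> (1 <= a)%nat -> (1 <= b)%nat ->
  beta lam a + beta lam b <= beta lam (a + b - 1) + 1.
Proof. intros Hl Ha Hb. induction a as [|a IH]; [lia|].
  destruct a.
  - replace (1 + b - 1)%nat with b by lia. rewrite (beta_S lam 0) by lra. rewrite beta_0. lra.
  - assert (IH' := IH ltac:(lia)).
    replace (S (S a) + b - 1)%nat with (S (S a + b - 1)) by lia.
    rewrite (beta_S lam (S a)) by lra. rewrite (beta_S lam (S a + b - 1)) by lra.
    pose proof (mu_ge1 lam Hl). pose proof (beta_ge1 lam b Hl Hb).
    set (mu := / lam) in *. nra. Qed.


Fixpoint LS (l : list R) : Prop :=
  match l with
  | nil => True
  | x :: l' => match l' with nil => True | y :: _ => x <= y /\ LS l' end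
  end.

Fixpoint ldist (a b : list R) : R :=
  match a, b with
  | x :: a', y :: b' => Rabs (x - y) + ldist a' b'
  | _, _ => 0
  end.

Fixpoint ins (A : Type) (f : A -> R) (x : A) (l : list A) : list A :=
  match l with
  | nil => [x]
  | y :: l' => if Rle_dec (f x) (f y) then x :: y :: l' else y :: ins A f x l'
  end.

Lemma ins_perm (A : Type) (f : A -> R) x l : Permutation (ins A f x l) (x :: l).
Proof. induction l as [|y l IH]; simpl; [auto|].
  destruct (Rle_dec (f x) (f y)); [auto|].
  eapply perm_trans; [apply perm_skip, IH|]. apply perm_swap. Qed.

Lemma LS_tail x l : LS (x :: l) -> LS l.
Proof. simpl. destruct l; tauto. Qed.

Lemma ins_sorted (A : Type) (f : A -> R) x l : LS (map f l) -> LS (map f (ins A f x l)).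
Proof. induction l as [|y l IH]; simpl; [auto|].
  intros H. destruct (Rle_dec (f x) (f y)).
  - simpl. split; auto.
  - assert (Hl : LS (map f l)) by (eapply LS_tail; eauto).
    specialize (IH Hl). destruct l as [|z l]; simpl in *.
    + split; [lra|auto].
    + destruct (Rle_dec (f x) (f z)); simpl in *; split; try tauto; lra.
Qed.

Lemma uncross a b c d : a <= b -> c <= d ->
  Rabs (a - c) + Rabs (b - d) <= Rabs (b - c) + Rabs (a - d).
Proof. intros. unfold Rabs; repeat destruct Rcase_abs; lra. Qed.

Lemma ins_dist (A : Type) (f : A -> R) : forall W U x, LS (map f W) -> LS U -> length U = S (length W) ->
  ldist (map f (ins A f x W)) U <= Rabs (f x - hd 0 U) + ldist (map f W) (tl U).
Proof. induction W as [|w W IH]; intros U x HW HU HL.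
  - destruct U as [|u U]; simpl in *; [lia|]. destruct U; simpl in *; [lra|lia].
  - destruct U as [|u U]; simpl in HL; [lia|]. simpl.
    destruct (Rle_dec (f x) (f w)).
    + simpl. lra.
    + simpl. destruct U as [|u2 U]; simpl in HL; [lia|].
      assert (HU' : LS (u2 :: U)) by (eapply LS_tail; eauto).
      assert (Hu : u <= u2) by (simpl in HU; tauto).
      specialize (IH (u2 :: U) x (LS_tail _ _ HW) HU' ltac:(simpl; lia)).
      simpl in IH |- *.
      pose proof (uncross (f w) (f x) u u2 ltac:(lra) Hu). lra.
Qed.

Lemma sort_exists (A : Type) (f : A -> R) : forall V U, LS U -> length U = length V ->
  exists W, Permutation W V /\ LS (map f W) /\ ldist (map f W) U <= ldist (map f V) U.
Proof. induction V as [|v V IH]; intros U HU HL.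
  - exists nil. simpl. repeat split; auto. lra.
  - destruct U as [|u U]; simpl in HL; [lia|].
    destruct (IH U (LS_tail _ _ HU) ltac:(lia)) as [W [HP [HS HD]]].
    exists (ins A f v W). split; [|split].
    + eapply perm_trans; [apply ins_perm|]. auto.
    + apply ins_sorted; auto.
    + pose proof (ins_dist A f W (u :: U) v HS HU) as H.
      rewrite (Permutation_length HP) in H. specialize (H ltac:(simpl; lia)).
      simpl in H |- *. lra.
Qed.

Lemma LS_nth : forall l i j, LS l -> (i <= j)%nat -> (j < length l)%nat -> nth i l 0 <= nth j l 0.
Proof. induction l as [|x l IH]; intros i j H Hij Hj; simpl in Hj; [lia|].
  destruct i, j; simpl; try lra; try lia.
  - destruct l as [|y l]; simpl in Hj; [lia|].
    assert (x <= y) by (simpl in H; tauto).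
    pose proof (IH 0%nat j (LS_tail _ _ H) ltac:(lia) ltac:(simpl; lia)). simpl in *. lra.
  - apply IH; auto; [eapply LS_tail; eauto|lia|lia].
Qed.

Lemma LS_seq f : forall n a, (forall i, (a <= i)%nat -> (S i < a + n)%nat -> f i <= f (S i)) ->
  LS (map f (seq a n)).
Proof. induction n as [|n IH]; intros a H; simpl; auto.
  destruct n as [|n]; simpl; auto. split.
  - apply H; lia.
  - change (LS (map f (seq (S a) (S n)))). apply IH. intros; apply H; lia.
Qed.

Definition lsum (l : list R) : R := fold_right Rplus 0 l.

Lemma lsum_perm l l' : Permutation l l' -> lsum l = lsum l'.
Proof. induction 1; simpl; lra. Qed.

Lemma dist_map (o' o : nat -> R) T :
  ldist (map o' T) (map o T) = lsum (map (fun j => Rabs (o' j - o j)) T).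
Proof. induction T; simpl; auto. rewrite IHT; auto. Qed.

Lemma lsum_seq g : forall n a, lsum (map g (seq a n)) = sumR n (fun j => g (a + j)%nat).
Proof. induction n as [|n IH]; intros a; [reflexivity|].
  change (lsum (map g (seq a (S n)))) with (g a + lsum (map g (seq (S a) n))).
  rewrite IH. rewrite (sumR_front n (fun j => g (a + j)%nat)). 
  replace (a + 0)%nat with a by lia. 
  f_equal. apply sumR_ext. intros j _. f_equal. lia. Qed.

Lemma dist_nth : forall n U' U, length U' = n -> length U = n ->
  ldist U' U = sumR n (fun j => Rabs (nth j U' 0 - nth j U 0)).
Proof. induction n as [|n IH]; intros U' U H1 H2.
  - destruct U', U; simpl in *; try lia; auto.
  - destruct U' as [|a U']; destruct U as [|b U]; simpl in H1, H2; try lia.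
    rewrite sumR_front. cbn [nth ldist]. rewrite (IH U' U); auto. Qed.


Lemma mid_ineq lam mu P0 Q0 t x y D1 D2 va vb :
  lam * mu = 1 -> 0 < lam <= 1 -> 1 <= mu -> 0 <= P0 -> 0 <= Q0 -> 0 <= t ->
  ((va = 1 /\ vb = lam) \/ (va = lam /\ vb = 1)) -> x = va * t -> y = vb * t ->
  ((D1 = - x /\ D2 <= y) \/ (D1 <= x /\ D2 = - y)) ->
  let Bi := 1 + mu * P0 in let Bi1 := 1 + mu * Bi in
  let Q1 := 1 + mu * Q0 in let Q2 := 1 + mu * Q1 in
  let mi := Bi + Q2 - 1 in let mi1 := Bi1 + Q1 - 1 in
  let g0 := mu * P0 * Q2 in let g1 := mu * Bi * Q1 in let g2 := mu * Bi1 * Q0 in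
  (va + vb) * t + mi * D1 + (g0 - g1) * x + mi1 * D2 + (g1 - g2) * (- y) <= 0.
Proof.
  intros Hlm Hl Hmu HP HQ Ht Hv Hx Hy HD Bi Bi1 Q1 Q2 mi mi1 g0 g1 g2.
  assert (Hmi : 0 <= mi) by (unfold mi, Bi, Q2, Q1; nra).
  assert (Hmi1 : 0 <= mi1) by (unfold mi1, Bi1, Bi, Q1; nra).
  assert (Eb : mu * mi - mi1 + mu * (g0 - g1) + (g2 - g1) = - mu - 1)
    by (unfold mi, mi1, g0, g1, g2, Bi1, Bi, Q2, Q1; ring).
  assert (Ec : - mi + mu * mi1 + (g0 - g1) + mu * (g2 - g1) = - 1 - mu)
    by (unfold mi, mi1, g0, g1, g2, Bi1, Bi, Q2, Q1; ring).
  assert (Hmm : 1 <= mu * mu) by nra.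
  assert (HP3 : mu * P0 <= mu * mu * (mu * P0)) by (assert (0 <= mu * P0) by nra; nra).
  assert (HQ3 : Q0 <= mu * mu * Q0) by nra.
  assert (Hm1 : mi1 <= mu * mi) by (unfold mi, mi1, Bi1, Bi, Q2, Q1; nra).
  assert (Hm2 : mi <= mu * mi1) by (unfold mi, mi1, Bi1, Bi, Q2, Q1; nra).
  clearbody mi mi1 g0 g1 g2.
  assert (Hlam : lam = / mu) by (field_simplify_eq; lra).
  destruct Hv as [[-> ->]|[-> ->]]; subst x y;
  destruct HD as [[-> HD2]|[HD1 ->]].
  - assert (mi1 * D2 <= mi1 * (lam * t)) by nra.
    assert (C: 1 + lam - mi + (g0 - g1) + lam * mi1 + lam * (g2 - g1) <= 0).
    { rewrite Hlam. apply Rmult_le_reg_l with mu; [lra|]. field_simplify; [|lra]. nra. }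
    nra.
  - assert (mi * D1 <= mi * t) by nra.
    assert (C: 1 + lam + mi + (g0 - g1) - lam * mi1 + lam * (g2 - g1) <= 0).
    { rewrite Hlam. apply Rmult_le_reg_l with mu; [lra|]. field_simplify; [|lra]. nra. }
    nra.
  - assert (mi1 * D2 <= mi1 * t) by nra.
    assert (C: 1 + lam - lam * mi + lam * (g0 - g1) + mi1 + (g2 - g1) <= 0).
    { rewrite Hlam. apply Rmult_le_reg_l with mu; [lra|]. field_simplify; [|lra]. nra. }
    nra.
  - assert (mi * D1 <= mi * (lam * t)) by nra.
    assert (C: 1 + lam + lam * mi + lam * (g0 - g1) - mi1 + (g2 - g1) <= 0).
    { rewrite Hlam. apply Rmult_le_reg_l with mu; [lra|]. field_simplify; [|lra]. nra. }
    nra.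
Qed.

Definition mw lam k j := beta lam j + beta lam (k + 1 - j) - 1.
Definition gw lam k j := / lam * beta lam j * beta lam (k - j).
Definition Phi lam k (s : nat -> R) (U : list R) :=
  sumR k (fun j => mw lam k (S j) * Rabs (s (S j) - nth j U 0))
  + sumR (S k) (fun j => gw lam k j * (s (S j) - s j)).
Definition sortedS k (s : nat -> R) :=
  forall i j, (1 <= i)%nat -> (i <= j)%nat -> (j <= k)%nat -> s i <= s j.

Lemma upd_eq s i v : upd s i v i = v.
Proof. unfold upd. rewrite Nat.eqb_refl. auto. Qed.
Lemma upd_neq s i v j : j <> i -> upd s i v j = s j.
Proof. intros H. unfold upd. destruct (Nat.eqb_spec j i); congruence. Qed.

Lemma Phi_upd lam k s U q v : (1 <= q <= k)%nat ->
  Phi lam k (upd s q v) U = Phi lam k s U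
    + mw lam k q * (Rabs (v - nth (q - 1) U 0) - Rabs (s q - nth (q - 1) U 0))
    + (gw lam k (q - 1) - gw lam k q) * (v - s q).
Proof. intros Hq. unfold Phi.
  rewrite (sumR_pt k (fun j => mw lam k (S j) * Rabs (s (S j) - nth j U 0))
     (fun j => mw lam k (S j) * Rabs (upd s q v (S j) - nth j U 0)) (q - 1)); [| lia |].
  2:{ intros j _ Hj. rewrite upd_neq; auto. lia. }
  rewrite (sumR_pt2 (S k) (fun j => gw lam k j * (s (S j) - s j))
     (fun j => gw lam k j * (upd s q v (S j) - upd s q v j)) (q - 1) q); [| lia | lia | lia |].
  2:{ intros j _ Hj1 Hj2. rewrite !upd_neq; auto; lia. }
  replace (S (q - 1)) with q by lia.
  rewrite !upd_eq. rewrite (upd_neq s q v (q - 1)) by lia. rewrite (upd_neq s q v (S q)) by lia.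
  ring. Qed.

Lemma gw_nonneg lam k j : 0 < lam <= 1 -> 0 <= gw lam k j.
Proof. intros Hl. unfold gw. pose proof (mu_ge1 lam Hl).
  pose proof (beta_nonneg lam j Hl). pose proof (beta_nonneg lam (k - j) Hl).
  apply Rmult_le_pos; [apply Rmult_le_pos|]; lra. Qed.

Lemma mw_bounds lam k j : 0 < lam <= 1 -> (1 <= j <= k)%nat ->
  1 <= mw lam k j <= beta lam k.
Proof. intros Hl Hj. unfold mw.
  pose proof (beta_ge1 lam j Hl ltac:(lia)). pose proof (beta_ge1 lam (k + 1 - j) Hl ltac:(lia)).
  pose proof (beta_conv lam j (k + 1 - j) Hl ltac:(lia) ltac:(lia)).
  replace (j + (k + 1 - j) - 1)%nat with k in H1 by lia. lra. Qed.

Lemma Phi_nonneg lam k s U : 0 < lam <= 1 -> sortedS k s -> 0 <= Phi lam k s U.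
Proof. intros Hl Hs. unfold Phi. apply Rplus_le_le_0_compat; apply sumR_nonneg; intros j Hj.
  - pose proof (mw_bounds lam k (S j) Hl ltac:(lia)). pose proof (Rabs_pos (s (S j) - nth j U 0)). nra.
  - destruct (Nat.eq_dec j 0) as [->|Hj0].
    + unfold gw. rewrite beta_0. lra.
    + destruct (Nat.eq_dec j k) as [->|Hjk].
      * unfold gw. rewrite Nat.sub_diag, beta_0. lra.
      * pose proof (gw_nonneg lam k j Hl). assert (s j <= s (S j)) by (apply Hs; lia). nra.
Qed.

Lemma Phi_opt lam k s U U' : 0 < lam <= 1 -> length U = k -> length U' = k ->
  Phi lam k s U' <= Phi lam k s U + beta lam k * ldist U' U.
Proof. intros Hl H1 H2. rewrite (dist_nth k U' U) by auto. unfold Phi.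
  rewrite <- sumR_scal.
  assert (sumR k (fun j => mw lam k (S j) * Rabs (s (S j) - nth j U' 0)) <=
    sumR k (fun j => mw lam k (S j) * Rabs (s (S j) - nth j U 0)) +
    sumR k (fun j => beta lam k * Rabs (nth j U' 0 - nth j U 0))).
  { rewrite <- sumR_plus. apply sumR_le. intros j Hj.
    pose proof (mw_bounds lam k (S j) Hl ltac:(lia)).
    assert (Rabs (s (S j) - nth j U' 0) <= Rabs (s (S j) - nth j U 0) + Rabs (nth j U' 0 - nth j U 0)).
    { replace (s (S j) - nth j U' 0) with ((s (S j) - nth j U 0) + - (nth j U' 0 - nth j U 0)) by ring.
      eapply Rle_trans; [apply Rabs_triang|]. rewrite Rabs_Ropp. lra. }
    pose proof (Rabs_pos (nth j U' 0 - nth j U 0)). nra. }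
  lra. Qed.

Lemma find_gap_spec s r : forall n i, find_gap s r n = Some i ->
  (1 <= i <= n)%nat /\ s i < r /\ r < s (S i).
Proof. induction n as [|n IH]; intros i H; simpl in H; [discriminate|].
  destruct (find_gap s r n) eqn:E.
  - inversion H; subst. destruct (IH i eq_refl). split; [lia|auto].
  - destruct (Rlt_dec (s (S n)) r); [|discriminate].
    destruct (Rlt_dec r (s (S (S n)))); [|discriminate].
    inversion H; subst. split; [lia|auto]. Qed.

Lemma sorted_upd k s q v : sortedS k s -> (1 <= q <= k)%nat ->
  ((1 < q)%nat -> s (q - 1)%nat <= v) -> ((q < k)%nat -> v <= s (S q)) ->
  sortedS k (upd s q v).
Proof. intros Hs Hq H1 H2 i j Hi Hij Hj.
  destruct (Nat.eq_dec i q) as [->|Hiq]; destruct (Nat.eq_dec j q) as [->|Hjq].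
  - rewrite upd_eq; lra.
  - rewrite upd_eq, upd_neq by auto. assert (s (S q) <= s j) by (apply Hs; lia).
    specialize (H2 ltac:(lia)). lra.
  - rewrite upd_eq, upd_neq by auto. assert (s i <= s (q - 1)%nat) by (apply Hs; lia).
    specialize (H1 ltac:(lia)). lra.
  - rewrite !upd_neq by auto. apply Hs; lia. Qed.


Lemma mid_case lam k s U r m i va vb s' c :
  (1 <= k)%nat -> 0 < lam <= 1 -> sortedS k s -> LS U -> length U = k ->
  (m < k)%nat -> nth m U 0 = r -> (1 <= i <= k - 1)%nat -> s i < r -> r < s (S i) ->
  ((va = 1 /\ vb = lam) \/ (va = lam /\ vb = 1)) ->
  let t := Rmin ((r - s i) / va) ((s (S i) - r) / vb) in
  s' = upd (upd s i (s i + va * t)) (S i) (s (S i) - vb * t) ->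
  c = (va + vb) * t ->
  sortedS k s' /\ c + Phi lam k s' U <= Phi lam k s U.
Proof.
  intros Hk Hl Hs HU HL Hm Hmr Hi Hri Hri1 Hv t Hs' Hc.
  assert (Hva : 0 < va) by (destruct Hv as [[-> ->]|[-> ->]]; lra).
  assert (Hvb : 0 < vb) by (destruct Hv as [[-> ->]|[-> ->]]; lra).
  set (a := s i) in *. set (b := s (S i)) in *.
  assert (Ht0 : 0 <= t).
  { unfold t. apply Rmin_glb; apply Rlt_le; apply Rdiv_lt_0_compat; lra. }
  assert (Hx : va * t <= r - a).
  { assert (t <= (r - a) / va) by apply Rmin_l.
    apply Rmult_le_compat_l with (r := va) in H; [|lra].
    replace (va * ((r - a) / va)) with (r - a) in H by (field; lra). lra. }
  assert (Hy : vb * t <= b - r).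
  { assert (t <= (b - r) / vb) by apply Rmin_r.
    apply Rmult_le_compat_l with (r := vb) in H; [|lra].
    replace (vb * ((b - r) / vb)) with (b - r) in H by (field; lra). lra. }
  assert (Hx0 : 0 <= va * t) by nra. assert (Hy0 : 0 <= vb * t) by nra.
  set (x := va * t) in *. set (y := vb * t) in *.
  subst s' c. split.
  - apply sorted_upd; [apply sorted_upd| | |].
    + auto.
    + lia.
    + intros. assert (s (i - 1)%nat <= a) by (apply Hs; lia). lra.
    + intros. fold b. lra.
    + lia.
    + intros. replace (S i - 1)%nat with i by lia. rewrite upd_eq. lra.
    + intros. rewrite upd_neq by lia. assert (b <= s (S (S i))) by (apply Hs; lia). lra.
  - rewrite Phi_upd by lia. rewrite Phi_upd by lia.
    rewrite (upd_neq s i (a + x) (S i)) by lia. fold a b.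
    replace (S i - 1)%nat with i by lia.
    set (D1 := Rabs (a + x - nth (i - 1) U 0) - Rabs (a - nth (i - 1) U 0)).
    set (D2 := Rabs (b - y - nth i U 0) - Rabs (b - nth i U 0)).
    assert (HD : (D1 = - x /\ D2 <= y) \/ (D1 <= x /\ D2 = - y)).
    { destruct (Compare_dec.le_lt_dec m (i - 1)) as [Hmi|Hmi].
      - left. assert (r <= nth (i - 1) U 0) by (rewrite <- Hmr; apply LS_nth; [exact HU|lia|rewrite HL; lia]).
        assert (r <= nth i U 0) by (rewrite <- Hmr; apply LS_nth; [exact HU|lia|rewrite HL; lia]).
        unfold D1, D2. split.
        + rewrite (Rabs_left1 (a + x - _)) by lra. rewrite (Rabs_left1 (a - _)) by lra. lra.
        + assert (Rabs (b - y - nth i U 0) <= Rabs (b - nth i U 0) + y).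
          { replace (b - y - nth i U 0) with ((b - nth i U 0) + - y) by ring.
            eapply Rle_trans; [apply Rabs_triang|]. rewrite Rabs_Ropp, (Rabs_pos_eq y) by lra. lra. }
          lra.
      - right. assert (nth (i - 1) U 0 <= r) by (rewrite <- Hmr; apply LS_nth; [exact HU|lia|rewrite HL; lia]).
        assert (nth i U 0 <= r) by (rewrite <- Hmr; apply LS_nth; [exact HU|lia|rewrite HL; lia]).
        unfold D1, D2. split.
        + assert (Rabs (a + x - nth (i - 1) U 0) <= Rabs (a - nth (i - 1) U 0) + x).
          { replace (a + x - nth (i - 1) U 0) with ((a - nth (i - 1) U 0) + x) by ring.
            eapply Rle_trans; [apply Rabs_triang|]. rewrite (Rabs_pos_eq x) by lra. lra. }
          lra.
        + rewrite (Rabs_pos_eq (b - y - _)) by lra. rewrite (Rabs_pos_eq (b - _)) by lra. lra. }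
    clearbody D1 D2.
    destruct i as [|i0]; [lia|].
    set (k0 := (k - S i0 - 1)%nat).
    assert (Ek : k = S (S i0 + k0)) by lia.
    set (mu := / lam).
    assert (Hlm : lam * mu = 1) by (unfold mu; field; lra).
    pose proof (mu_ge1 lam Hl) as Hmu. fold mu in Hmu.
    pose proof (beta_nonneg lam i0 Hl) as HP. pose proof (beta_nonneg lam k0 Hl) as HQ.
    pose proof (mid_ineq lam mu (beta lam i0) (beta lam k0) t x y D1 D2 va vb Hlm Hl Hmu HP HQ Ht0 Hv eq_refl eq_refl HD) as HM.
    cbv zeta in HM.
    assert (E1 : mw lam k (S i0) = (1 + mu * beta lam i0) + (1 + mu * (1 + mu * beta lam k0)) - 1).
    { unfold mw. replace (k + 1 - S i0)%nat with (S (S k0)) by lia.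
      rewrite !beta_S by lra. reflexivity. }
    assert (E2 : mw lam k (S (S i0)) = (1 + mu * (1 + mu * beta lam i0)) + (1 + mu * beta lam k0) - 1).
    { unfold mw. replace (k + 1 - S (S i0))%nat with (S k0) by lia.
      rewrite !beta_S by lra. reflexivity. }
    assert (E3 : gw lam k (S i0 - 1) = mu * beta lam i0 * (1 + mu * (1 + mu * beta lam k0))).
    { unfold gw. replace (S i0 - 1)%nat with i0 by lia. replace (k - i0)%nat with (S (S k0)) by lia.
      rewrite !beta_S by lra. reflexivity. }
    assert (E4 : gw lam k (S i0) = mu * (1 + mu * beta lam i0) * (1 + mu * beta lam k0)).
    { unfold gw. replace (k - S i0)%nat with (S k0) by lia.
      rewrite !beta_S by lra. reflexivity. }
    assert (E5 : gw lam k (S (S i0)) = mu * (1 + mu * (1 + mu * beta lam i0)) * beta lam k0).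
    { unfold gw. replace (k - S (S i0))%nat with k0 by lia.
      rewrite !beta_S by lra. reflexivity. }
    rewrite E1, E2, E3, E4, E5.
    replace (a + x - a) with x by ring. replace (b - y - b) with (- y) by ring.
    lra.
Qed.


Lemma alg_step lam k s U r p s' c :
  (1 <= k)%nat -> 0 < lam <= 1 -> sortedS k s -> LS U -> length U = k ->
  (exists m, (m < k)%nat /\ nth m U 0 = r) ->
  ldc_step lam k s r p = (s', c) ->
  sortedS k s' /\ c + Phi lam k s' U <= Phi lam k s U.
Proof.
  intros Hk Hl Hs HU HL [m [Hm Hmr]] H.
  assert (Hb1 : beta lam 1 = 1) by (rewrite beta_S, beta_0 by lra; ring).
  assert (HbK : beta lam k = 1 + / lam * beta lam (k - 1)).
  { replace k with (S (k - 1)) at 1 by lia. apply beta_S; lra. }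
  unfold ldc_step in H. destruct (Rlt_dec r (s 1%nat)) as [Hr1|Hr1].
  - inversion H; subst s' c. split.
    + apply sorted_upd; [exact Hs|lia|intros; lia|].
      intros. assert (s 1%nat <= s 2%nat) by (apply Hs; lia). lra.
    + rewrite Phi_upd by lia. replace (1 - 1)%nat with 0%nat by lia.
      assert (nth 0 U 0 <= r) by (rewrite <- Hmr; apply LS_nth; [exact HU|lia|rewrite HL; lia]).
      rewrite (Rabs_pos_eq (r - _)) by lra. rewrite (Rabs_pos_eq (s 1%nat - _)) by lra.
      unfold mw, gw. rewrite beta_0. replace (k + 1 - 1)%nat with k by lia.
      rewrite Hb1. rewrite HbK. ring_simplify. lra.
  - destruct (Rlt_dec (s k) r) as [Hrk|Hrk].
    + inversion H; subst s' c. split.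
      * apply sorted_upd; [exact Hs|lia| |intros; lia].
        intros. assert (s (k - 1)%nat <= s k) by (apply Hs; lia). lra.
      * rewrite Phi_upd by lia.
        assert (r <= nth (k - 1) U 0) by (rewrite <- Hmr; apply LS_nth; [exact HU|lia|rewrite HL; lia]).
        rewrite (Rabs_left1 (r - _)) by lra. rewrite (Rabs_left1 (s k - _)) by lra.
        unfold mw, gw. rewrite Nat.sub_diag, beta_0. replace (k + 1 - k)%nat with 1%nat by lia.
        replace (k - (k - 1))%nat with 1%nat by lia.
        rewrite Hb1. rewrite HbK. ring_simplify. lra.
    + destruct (find_gap s r (k - 1)) as [i|] eqn:E.
      * destruct (find_gap_spec s r (k - 1) i E) as [Hi [Hri Hri1]].
        cbv zeta in H.
        destruct (Nat.leb p i); inversion H; subst s' c.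
        -- apply (mid_case lam k s U r m i 1 lam); auto.
        -- apply (mid_case lam k s U r m i lam 1); auto.
      * inversion H; subst. split; auto. lra.
Qed.

Lemma sched_cost_cons k r rs sched :
  sched_cost k (r :: rs) sched =
  sumR k (fun j => Rabs (sched 1%nat (S j) - sched 0%nat (S j)))
  + sched_cost k rs (fun t => sched (S t)).
Proof. unfold sched_cost. simpl length. rewrite sumR_front. reflexivity. Qed.

Lemma main_ind lam k ps : (1 <= k)%nat -> 0 < lam <= 1 ->
  forall rs t s U T sched,
  sortedS k s -> LS U -> Permutation T (seq 1 k) -> U = map (sched 0%nat) T ->
  (forall t', (t' < length rs)%nat -> exists j, (1 <= j <= k)%nat /\ sched (S t') j = nth t' rs 0) ->
  ldc_cost lam k s rs ps t <= beta lam k * sched_cost k rs sched + Phi lam k s U.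
Proof.
  intros Hk Hl rs. induction rs as [|r rs IH]; intros t s U T sched Hs HU HT HUe Hreq.
  - simpl. unfold sched_cost. simpl. pose proof (Phi_nonneg lam k s U Hl Hs). lra.
  - simpl ldc_cost. destruct (ldc_step lam k s r (ps t)) as [s' c] eqn:Estep.
    rewrite sched_cost_cons.
    assert (HLT : length T = k) by (rewrite (Permutation_length HT), length_seq; auto).
    assert (HLU : length U = k) by (rewrite HUe, length_map; auto).
    destruct (sort_exists nat (sched 1%nat) T U HU ltac:(lia)) as [W [HW [HWs HWd]]].
    set (U' := map (sched 1%nat) W).
    assert (HLU' : length U' = k) by (unfold U'; rewrite length_map, (Permutation_length HW); auto).
    assert (Hr : exists m, (m < k)%nat /\ nth m U' 0 = r).
    { destruct (Hreq 0%nat ltac:(simpl; lia)) as [j [Hj Hjr]]. simpl in Hjr.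
      assert (In j W).
      { apply Permutation_in with T; [apply Permutation_sym; auto|].
        apply Permutation_in with (seq 1 k); [apply Permutation_sym; auto|].
        apply in_seq. lia. }
      assert (In r U') by (unfold U'; rewrite <- Hjr; apply in_map; auto).
      destruct (In_nth U' r 0 H0) as [m [Hm Hmr]]. exists m. split; [lia|auto]. }
    destruct (alg_step lam k s U' r (ps t) s' c Hk Hl Hs HWs HLU' Hr Estep) as [Hs' Hstep].
    assert (Hopt : Phi lam k s U' <= Phi lam k s U + beta lam k *
              sumR k (fun j => Rabs (sched 1%nat (S j) - sched 0%nat (S j)))).
    { eapply Rle_trans; [apply (Phi_opt lam k s U U'); auto|].
      assert (ldist U' U <= sumR k (fun j => Rabs (sched 1%nat (S j) - sched 0%nat (S j)))).
      { eapply Rle_trans; [apply HWd|]. rewrite HUe, dist_map.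
        rewrite (lsum_perm _ (map (fun j => Rabs (sched 1%nat j - sched 0%nat j)) (seq 1 k)))
          by (apply Permutation_map; auto).
        rewrite lsum_seq. right. apply sumR_ext. intros. reflexivity. }
      pose proof (beta_ge1 lam k Hl Hk). apply Rplus_le_compat_l, Rmult_le_compat_l; [lra|exact H]. }
    assert (HIH := IH (S t) s' U' W (fun t => sched (S t)) Hs' HWs
       (perm_trans HW HT) eq_refl).
    assert (HIH' : ldc_cost lam k s' rs ps (S t) <=
       beta lam k * sched_cost k rs (fun t => sched (S t)) + Phi lam k s' U').
    { apply HIH. intros t' Ht'. destruct (Hreq (S t') ltac:(simpl; lia)) as [j Hj].
      exists j. simpl in Hj. auto. }
    lra.
Qed.


Lemma sched_cost_nonneg k rs sched : 0 <= sched_cost k rs sched.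
Proof. unfold sched_cost. apply sumR_nonneg. intros. apply sumR_nonneg. intros. apply Rabs_pos. Qed.

Theorem lemma9 :
  forall (k : nat) (lam : R) (s0 : nat -> R),
    (1 <= k)%nat ->
    0 < lam <= 1 ->
    (forall i j, (1 <= i)%nat -> (i <= j)%nat -> (j <= k)%nat -> s0 i <= s0 j) ->
    exists c : R, 0 <= c /\
      forall (rs : list R) (ps : nat -> nat),
        (forall t, (1 <= ps t <= k)%nat) ->
        LambdaDC lam k s0 rs ps <= beta lam k * OPT k s0 rs + c.
Proof.
  intros k lam s0 Hk Hl Hs0.
  exists (Phi lam k s0 (map s0 (seq 1 k))). split.
  { apply Phi_nonneg; auto. }
  intros rs ps _.
  set (c := Phi lam k s0 (map s0 (seq 1 k))).
  assert (Hb : 1 <= beta lam k) by (apply beta_ge1; auto).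
  assert (Hall : forall sched, feasible k s0 rs sched ->
     LambdaDC lam k s0 rs ps <= beta lam k * sched_cost k rs sched + c).
  { intros sched [H0 H1]. unfold LambdaDC, c.
    apply (main_ind lam k ps Hk Hl rs 0 s0 _ (seq 1 k) sched).
    - exact Hs0.
    - apply LS_seq. intros. apply Hs0; lia.
    - apply Permutation_refl.
    - apply map_ext_in. intros j Hj. apply in_seq in Hj. symmetry. apply H0. lia.
    - exact H1. }
  set (E := fun x => exists sched, feasible k s0 rs sched /\ x = sched_cost k rs sched).
  set (sch := fun t j => match t with O => s0 j | S t' => if Nat.eqb j 1 then nth t' rs 0 else s0 j end).
  assert (Hsch : feasible k s0 rs sch).
  { split.
    - intros. reflexivity.
    - intros t Ht. exists 1%nat. split; [lia|]. reflexivity. }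
  destruct (Glb_Rbar_correct E) as [Hlb Hglb].
  assert (Hup : Rbar_le (Glb_Rbar E) (sched_cost k rs sch)).
  { apply Hlb. exists sch. auto. }
  assert (Hdown : Rbar_le ((LambdaDC lam k s0 rs ps - c) / beta lam k) (Glb_Rbar E)).
  { apply Hglb. intros x [sched [Hf ->]]. simpl.
    specialize (Hall sched Hf).
    apply Rmult_le_reg_l with (beta lam k); [lra|].
    field_simplify; [|lra]. lra. }
  unfold OPT. fold E.
  destruct (Glb_Rbar E) as [g| |]; simpl in Hup, Hdown |- *; try contradiction.
  apply Rmult_le_compat_l with (r := beta lam k) in Hdown; [|lra].
  field_simplify in Hdown; [|lra]. lra.
Qed.
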